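(* Let $\mathcal A=(Q,\Sigma,\delta,\rho)$ be a connected bireversible Mealy automaton whose labeled orbit tree $\mathfrak t(\mathcal A)$ has no active self-liftable branch, and let $\mathfrak j$ be a jungle tree of $\mathfrak t(\mathcal A)$. Then the relation $\sim$ on the set of stems of $\mathfrak j$ is an equivalence relation.
   Context: Mealy automata. A Mealy automaton is $\mathcal A=(Q,\Sigma,\delta,\rho)$ with $Q,\Sigma$ finite non-empty sets, $\delta=(\delta_i\colon Q\to Q)_{i\in\Sigma}$, $\rho=(\rho_x\colon\Sigma\to\Sigma)_{x\in Q}$; transitions $x\xrightarrow{i\mid\rho_x(i)}\delta_i(x)$. Invertible: each $\rho_x$ a permutation of $\Sigma$; reversible: each $\delta_i$ a permutation of $Q$; bireversible: invertible, reversible, and for each $j\in\Sigma$ the map $x\mapsto\delta_{\rho_x^{-1}(j)}(x)$ is a permutation of $Q$. Connected: the directed graph on $Q$ with edges $x\to\delta_i(x)$ is connected. Extensions: $\rho_x(i\mathbf s)=\rho_x(i)\rho_{\delta_i(x)}(\mathbf s)$ on $\Sigma^*$; $\rho_{x_1\cdots x_m}=\rho_{x_m}\circ\cdots\circ\rho_{x_1}$ (and $\rho$ of the empty word is the identity); dually $\delta_i(x\mathbf u)=\delta_i(x)\delta_{\rho_x(i)}(\mathbf u)$ on $Q^*$, $\delta_{i_1\cdots i_m}=\delta_{i_m}\circ\cdots\circ\delta_{i_1}$. The connected components of the $n$-th power $\mathcal A^n$ (stateset $Q^n$, transitions $\mathbf u\xrightarrow{i\mid\rho_{\mathbf u}(i)}\delta_i(\mathbf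 u)$) are, for reversible $\mathcal A$, the orbits of $Q^n$ under the maps $\delta_{\mathbf s}$. Orbit tree $\mathfrak t(\mathcal A)$: vertices at level $n\ge0$ are the connected components of $\mathcal A^n$; an edge from the component of $\mathbf u\in Q^n$ to that of $\mathbf ux$ for all $\mathbf u,x$; edge $C\to D$ labeled $\#D/\#C$. $\top,\bot$ = first/last vertex of a downward path; level of an edge/path = level of its top vertex. A word of $Q^*\cup Q^\omega$ represents the initial path through the components of its prefixes. Edge $e$ is liftable to $f$ if every word of $\bot(e)$ has a suffix in $\bot(f)$; paths $(e_i)_{i\in I}$, $(f_i)_{i\in I}$: liftable if each $e_i$ is liftable to $f_i$. $f$ is a legitimate child of $e$ if $\top(f)=\bot(e)$ and $f$ is liftable to $e$. A path/subtree $\mathfrak s$ is $k$-self-liftable if for all $i\ge0$ every path in $\mathfrak s$ starting at level $i+k$ is liftable to a path in $\mathfrak s$ starting at level $i$; self-liftable if $k$-self-liftable for some $k>0$. A branch (infinite initial path) is active if its labels are not eventually all $1$. Jungle trees: for a finite 1-self-liftable initial path $\mathbf e$ of length $n$ whose last edge has at least two legitimate children, all labeled $1$, $\mathfrak j(\mathbf e)$ consists of $\mathbf e$ plus all edges descending from $\bot(\mathbf e)$ that are liftable to the last edge of $\mathbf e$. Stems: the words of $\bot(\mathbf e)\subseteq Q^n$. A $\mathfrak j$-word is a word representing an initial path of $\mathfrak j$. For stems $\mathbf u,\mathbf v$: $\mathbf u\sim\mathbf v$ iff there is $\mathbf s\in Q^*$ such that $\mathbf{usv}$ is a $\mathfrak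 j$-word and $\rho_{\mathbf{us}}$ is the identity of $\Sigma^*$. *)

(* Defs.v *)
From mathcomp Require Import all_boot.
From mathcomp Require Import boolp.
From Stdlib Require Import Relations.Relation_Operators.

Set Implicit Arguments.
Unset Strict Implicit.
Unset Printing Implicit Defensive.

Section Mealy.
Variables (Q S : finType).
(* delta i : Q -> Q  (transition on input letter i);  rho x : S -> S (output) *)
Variables (delta : S -> Q -> Q) (rho : Q -> S -> S).

Fixpoint rho_word (x : Q) (s : seq S) : seq S :=
  match s with
  | [::] => [::]
  | i :: s' => rho x i :: rho_word (delta i x) s'
  end.

Definition rho_states (u : seq Q) (s : seq S) : seq S :=
  foldl (fun t x => rho_word x t) s u.

Fixpoint delta_word (i : S) (u : seq Q) : seq Q :=
  match u with
  | [::] => [::]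
  | x :: u' => delta i x :: delta_word (rho x i) u'
  end.

(* inverse of rho_x (the genuine inverse when rho_x is a permutation) *)
Definition rho_inv (x : Q) (j : S) : S := odflt j [pick i | rho x i == j].

Definition invertible : Prop := forall x, injective (rho x).
Definition reversible : Prop := forall i, injective (delta i).
Definition bireversible : Prop :=
  [/\ invertible, reversible & forall j, injective (fun x => delta (rho_inv x j) x)].

Definition connected_automaton : Prop :=
  forall x y, clos_refl_sym_trans Q (fun a b => exists i, b = delta i a) x y.

(* u and v lie in the same connected component of the power A^n
   (transitions u -> delta_i(u)) *)
Definition same_comp (u v : seq Q) : Prop :=
  clos_refl_sym_trans (seq Q) (fun a b => exists i, b = delta_word i a) u v.

(* cardinality of the component of u (a vertex of the orbit tree) *)
Definition comp_card (u : seq Q) : nat :=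
  #|[set t : (size u).-tuple Q | `[< same_comp u (val t) >]]|.

(* An edge of the orbit tree is represented by a (non-empty) word b of its
   bottom vertex; its top vertex is the component of (take (size b).-1 b). *)
Definition label_one (b : seq Q) : Prop :=
  comp_card b = comp_card (take (size b).-1 b).

(* edge with bottom word a is liftable to edge with bottom word b *)
Definition liftable_edge (a b : seq Q) : Prop :=
  forall w, same_comp a w -> exists p w', w = p ++ w' /\ same_comp b w'.

(* branches, represented by infinite words W *)
Definition pref (W : nat -> Q) (n : nat) : seq Q := mkseq W n.

Definition active_branch (W : nat -> Q) : Prop :=
  ~ (exists N, forall j, N <= j -> label_one (pref W j.+1)).

(* for a branch, the paths in it starting at level m+k are its segments, and
   liftability of paths is edgewise *)
Definition k_self_liftable_branch (k : nat) (W : nat -> Q) : Prop :=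
  forall m, liftable_edge (pref W (m + k).+1) (pref W m.+1).

Definition self_liftable_branch (W : nat -> Q) : Prop :=
  exists k, 0 < k /\ k_self_liftable_branch k W.

Definition no_active_self_liftable_branch : Prop :=
  forall W, ~ (active_branch W /\ self_liftable_branch W).

(* Jungle trees.  A finite initial path of length n is represented by a word
   ew of length n (its bottom vertex is the component of ew). *)
Definition one_self_liftable_path (ew : seq Q) : Prop :=
  forall m, m.+1 < size ew -> liftable_edge (take m.+2 ew) (take m.+1 ew).

Definition legit_child (ew b : seq Q) : Prop :=
  [/\ size b = (size ew).+1, same_comp (take (size ew) b) ew & liftable_edge b ew].

Definition jungle_path (ew : seq Q) : Prop :=
  [/\ 0 < size ew,
      one_self_liftable_path ew,
      (exists b1 b2, [/\ legit_child ew b1, legit_child ew b2 & ~ same_comp b1 b2])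
    & (forall b, legit_child ew b -> label_one b)].

(* the edge with bottom word b belongs to the jungle tree j(ew): it is an edge
   of the path ew, or it descends from the bottom of ew and is liftable to the
   last edge of ew *)
Definition in_jungle (ew b : seq Q) : Prop :=
  (size b <= size ew /\ same_comp b (take (size b) ew)) \/
  [/\ size ew < size b, same_comp (take (size ew) b) ew & liftable_edge b ew].

Definition jword (ew w : seq Q) : Prop :=
  forall j, 0 < j <= size w -> in_jungle ew (take j w).

Definition stem (ew u : seq Q) : Prop := same_comp ew u.

Definition stem_rel (ew u v : seq Q) : Prop :=
  exists s : seq Q, jword ew (u ++ s ++ v) /\
    forall t : seq S, rho_states (u ++ s) t = t.

End Mealy.

(* Main.v *)
Require Import Defs.
From mathcomp Require Import all_boot boolp zify.
From Stdlib Require Import Relations.Relation_Operators.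

Set Implicit Arguments.
Unset Strict Implicit.
Unset Printing Implicit Defensive.


Section Words.
Variables (Q S : finType) (delta : S -> Q -> Q) (rho : Q -> S -> S).

Local Notation rw := (rho_word delta rho).
Local Notation dw := (delta_word delta rho).
Local Notation rs := (rho_states delta rho).
Local Notation sc := (same_comp delta rho).

Definition delta_states (t : seq S) (u : seq Q) : seq Q :=
  foldl (fun u i => dw i u) u t.
Local Notation ds := delta_states.

Definition out_letter (u : seq Q) (i : S) : S := foldl (fun i x => rho x i) i u.

Lemma size_dw i u : size (dw i u) = size u.
Proof. by elim: u i => //= x u IH i; rewrite IH. Qed.

Lemma size_ds t u : size (ds t u) = size u.
Proof. by elim: t u => //= i t IH u; rewrite IH size_dw. Qed.

Lemma size_rw x s : size (rw x s) = size s.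
Proof. by elim: s x => //= i s IH x; rewrite IH. Qed.

Lemma size_rs u s : size (rs u s) = size s.
Proof. by elim: u s => //= x u IH s; rewrite /rho_states /= -/(rs u _) IH size_rw. Qed.

Lemma rs_cons x u s : rs (x :: u) s = rs u (rw x s).
Proof. by []. Qed.

Lemma rs_cat u v s : rs (u ++ v) s = rs v (rs u s).
Proof. by rewrite /rho_states foldl_cat. Qed.

Lemma ds_cat t t' u : ds (t ++ t') u = ds t' (ds t u).
Proof. by rewrite /delta_states foldl_cat. Qed.

Lemma dw_cat i u v : dw i (u ++ v) = dw i u ++ dw (out_letter u i) v.
Proof. by elim: u i => //= x u IH i; rewrite IH. Qed.

Lemma rs_consS u i t : rs u (i :: t) = out_letter u i :: rs (dw i u) t.
Proof. by elim: u i t => //= x u IH i t; rewrite rs_cons /= IH. Qed.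

Lemma rs_nil u : rs u [::] = [::].
Proof. by elim: u => //= x u IH; rewrite rs_cons. Qed.

Lemma ds_catQ t u v : ds t (u ++ v) = ds t u ++ ds (rs u t) v.
Proof.
elim: t u v => [|i t IH] u v /=; first by rewrite rs_nil.
rewrite /delta_states /= -/(ds t _) dw_cat IH rs_consS /=.
by rewrite /delta_states /= -/(ds t _).
Qed.

Lemma rw_cat x s s' : rw x (s ++ s') = rw x s ++ rs (ds s [:: x]) s'.
Proof.
elim: s x => [|i s IH] x /=; first by [].
by rewrite IH.
Qed.

Lemma ds_nil t : ds t [::] = [::].
Proof. by elim: t. Qed.

Lemma rs_catS u s s' : rs u (s ++ s') = rs u s ++ rs (ds s u) s'.
Proof.
elim: u s s' => [|x u IH] s s' /=.
  by rewrite ds_nil.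
rewrite rw_cat IH.
have -> : ds s (x :: u) = ds s [:: x] ++ ds (rs [:: x] s) u by rewrite -ds_catQ.
by rewrite rs_cat.
Qed.

Lemma take_rw k x s : take k (rw x s) = rw x (take k s).
Proof. by elim: s k x => [|i s IH] [|k] x //=; rewrite IH. Qed.

Lemma take_rs k u s : take k (rs u s) = rs u (take k s).
Proof. by elim: u s => //= x u IH s; rewrite IH take_rw. Qed.

Lemma take_ds k t u : take k (ds t u) = ds t (take k u).
Proof.
case: (leqP k (size u)) => hk.
  rewrite -{1}(cat_take_drop k u) ds_catQ take_size_cat //.
  by rewrite size_ds size_takel.
by rewrite !take_oversize ?size_ds // ltnW.
Qed.

Lemma drop_ds k t u : drop k (ds t u) = ds (rs (take k u) t) (drop k u).
Proof.
case: (leqP k (size u)) => hk.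
  rewrite -{1}(cat_take_drop k u) ds_catQ drop_size_cat //.
  by rewrite size_ds size_takel.
by rewrite !drop_oversize ?size_ds ?ds_nil // ltnW.
Qed.

Lemma sc_ds t u : sc u (ds t u).
Proof.
elim: t u => [|i t IH] u; first exact: rst_refl.
apply: rst_trans (IH (dw i u)).
by apply: rst_step; exists i.
Qed.

End Words.


Lemma pigeon (T : finType) (g : nat -> T) :
  exists i j, [/\ i < j, j <= #|T| & g i = g j].
Proof.
apply: contrapT => H.
have inj : injective (fun i : 'I_#|T|.+1 => g i).
  move=> [i hi] [j hj] /= e; apply/val_inj => /=.
  case: (ltngtP i j) => // h.
  - by exfalso; apply: H; exists i, j; split => //; rewrite -ltnS.
  - by exfalso; apply: H; exists j, i; split => //; rewrite -ltnS.
by move: (leq_card _ inj); rewrite card_ord ltnn.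
Qed.

Lemma iter_inj_gen (T : Type) (f : T -> T) n : injective f -> injective (iter n f).
Proof. by move=> hf; elim: n => //= n IH x y /hf /IH. Qed.

Lemma iter_return (T : finType) (f : seq T -> seq T) :
  injective f -> (forall u, size (f u) = size u) ->
  forall u, exists r, iter r.+1 f u = u.
Proof.
move=> finj fsz u.
have hs : forall i, size (iter i f u) == size u.
  by move=> i; elim: i => //= i /eqP IH; rewrite fsz IH.
pose g i : (size u).-tuple T := Tuple (hs i).
have [i [j [hij _ e]]] := pigeon g.
have e' : iter i f u = iter j f u by move: e => /(congr1 val).
exists (j - i).-1; rewrite prednK ?subn_gt0 //.
apply: (@iter_inj_gen _ f i finj); rewrite -iterD subnKC ?e' //; exact: ltnW.
Qed.

Lemma iter_preimage (T : finType) (f : seq T -> seq T) :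
  injective f -> (forall u, size (f u) = size u) ->
  forall u, exists v, f v = u.
Proof.
move=> finj fsz u; have [r hr] := iter_return finj fsz u.
by exists (iter r f u).
Qed.

Section Inj.
Variables (Q S : finType) (delta : S -> Q -> Q) (rho : Q -> S -> S).
Hypothesis Hrinj : forall x, injective (rho x).
Hypothesis Hdinj : forall i, injective (delta i).

Local Notation rw := (rho_word delta rho).
Local Notation dw := (delta_word delta rho).
Local Notation rs := (rho_states delta rho).
Local Notation sc := (same_comp delta rho).
Local Notation ds := (delta_states delta rho).

Lemma rw_inj x : injective (rw x).
Proof.
move=> s; elim: s x => [|i s IH] x [|j s'] //= [e1 e2].
have ij := Hrinj e1; subst j; by rewrite (IH _ _ e2).
Qed.

Lemma rs_inj u : injective (rs u).
Proof. elim: u => //= x u IH s s' /IH; exact: rw_inj. Qed.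

Lemma dw_inj i : injective (dw i).
Proof.
move=> u; elim: u i => [|x u IH] i [|y u'] //= [e1 e2].
have xy := Hdinj e1; subst y; by rewrite (IH _ _ e2).
Qed.

Lemma ds_inj t : injective (ds t).
Proof. elim: t => //= i t IH u u' /IH; exact: dw_inj. Qed.

Lemma sc_size u v : sc u v -> size u = size v.
Proof.
elim => //=.
- by move=> a b [i ->]; rewrite size_dw.
- by move=> a b c _ -> _ ->.
Qed.

Lemma ds_iter t k u : ds (flatten (nseq k t)) u = iter k (ds t) u.
Proof. by elim: k u => //= k IH u; rewrite ds_cat IH -iterSr. Qed.

Lemma rs_iter t k s : rs (flatten (nseq k t)) s = iter k (rs t) s.
Proof. by elim: k s => //= k IH s; rewrite rs_cat IH -iterSr. Qed.

Lemma sc_fwd u v : sc u v <-> exists t, v = ds t u.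
Proof.
split; last by move=> [t ->]; exact: sc_ds.
elim.
- by move=> a b [i ->]; exists [:: i].
- by move=> a; exists [::].
- move=> a b _ [t ->].
  have [r hr] := iter_return (@ds_inj t) (@size_ds _ _ delta rho t) a.
  by exists (flatten (nseq r t)); rewrite ds_iter -iterSr.
- by move=> a b c _ [t1 ->] _ [t2 ->]; exists (t1 ++ t2); rewrite ds_cat.
Qed.

Lemma sc_sym u v : sc u v -> sc v u.
Proof. exact: rst_sym. Qed.

Lemma sc_trans u v w : sc u v -> sc v w -> sc u w.
Proof. exact: rst_trans. Qed.

Lemma sc_take k u v : sc u v -> sc (take k u) (take k v).
Proof. by move=> /sc_fwd [t ->]; rewrite take_ds; apply: sc_ds. Qed.

Lemma sc_drop k u v : sc u v -> sc (drop k u) (drop k v).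
Proof. by move=> /sc_fwd [t ->]; rewrite drop_ds; apply: sc_ds. Qed.

Lemma sc_lift k a y : sc (take k a) y -> exists x, sc a x /\ take k x = y.
Proof.
move=> /sc_fwd [t ->]; exists (ds t a); split; first exact: sc_ds.
by rewrite take_ds.
Qed.

Lemma liftable_of a b : size b <= size a -> sc b (drop (size a - size b) a) ->
  liftable_edge delta rho a b.
Proof.
move=> hs hb w haw; exists (take (size a - size b) w), (drop (size a - size b) w).
split; first by rewrite cat_take_drop.
exact: sc_trans hb (sc_drop _ haw).
Qed.

Lemma liftable_to a b : liftable_edge delta rho a b -> size b <= size a ->
  sc b (drop (size a - size b) a).
Proof.
move=> /(_ a (rst_refl _ _ _)) [p [w' [-> h]]] _.
have -> : size (p ++ w') - size b = size p.
  by rewrite size_cat (sc_size h) addnK.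
by rewrite drop_size_cat.
Qed.

End Inj.


Section Card.
Variables (Q S : finType) (delta : S -> Q -> Q) (rho : Q -> S -> S).
Hypothesis Hrinj : forall x, injective (rho x).
Hypothesis Hdinj : forall i, injective (delta i).

Local Notation rw := (rho_word delta rho).
Local Notation dw := (delta_word delta rho).
Local Notation rs := (rho_states delta rho).
Local Notation sc := (same_comp delta rho).
Local Notation ds := (delta_states delta rho).

Lemma cc_eq u m : size u = m ->
  comp_card delta rho u = #|[set t : m.-tuple Q | `[< sc u (val t) >]]|.
Proof. by move=> <-. Qed.

Lemma tk_proof m (b : m.+1.-tuple Q) : size (take m b) == m.
Proof. by rewrite size_takel // size_tuple. Qed.

Definition tk m (b : m.+1.-tuple Q) : m.-tuple Q := Tuple (tk_proof b).

Lemma card_inj a m : size a = m.+1 ->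
  comp_card delta rho a = comp_card delta rho (take m a) ->
  forall x y, sc a x -> sc a y -> take m x = take m y -> x = y.
Proof.
move=> ha hc.
have hta : size (take m a) = m by rewrite size_takel // ha.
rewrite (cc_eq ha) (cc_eq hta) in hc.
set A := [set t : m.+1.-tuple Q | _] in hc.
set A' := [set t : m.-tuple Q | _] in hc.
have eqA : (@tk m) @: A = A'.
  apply/setP => y; apply/imsetP/idP.
  - move=> [x]; rewrite !inE => /asboolP hx -> /=.
    by apply/asboolP; apply: (sc_take Hdinj).
  - rewrite inE => /asboolP hy.
    have [x [hx hxy]] := sc_lift Hdinj hy.
    have hsx : size x == m.+1 by rewrite -(sc_size hx) ha.
    exists (Tuple hsx); first by rewrite inE; apply/asboolP.
    by apply/val_inj.
have hinj : {in A &, injective (@tk m)}.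
  by apply/imset_injP; rewrite eqA hc.
move=> x y hx hy hxy.
have hsx : size x == m.+1 by rewrite -(sc_size hx) ha.
have hsy : size y == m.+1 by rewrite -(sc_size hy) ha.
have := hinj (Tuple hsx) (Tuple hsy).
rewrite !inE => h.
have hx' : `[< sc a (val (Tuple hsx)) >] by apply/asboolP.
have hy' : `[< sc a (val (Tuple hsy)) >] by apply/asboolP.
move: (h hx' hy') => {}h.
have /(congr1 val) // : Tuple hsx = Tuple hsy.
by apply: h; apply/val_inj.
Qed.

End Card.


Lemma take_mkseq' (T : Type) (W : nat -> T) N m : N <= m -> take N (mkseq W m) = mkseq W N.
Proof. by move=> h; rewrite /mkseq -map_take take_iota (minn_idPl h). Qed.

Section Periodic.
Variables (T : Type) (x0 : T) (w : seq T).
Definition perW (i : nat) : T := nth x0 w (i %% size w).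

Lemma pref_add m : 0 < size w -> mkseq perW (size w + m) = w ++ mkseq perW m.
Proof.
move=> hw; rewrite /mkseq iotaD map_cat add0n.
congr (_ ++ _).
  rewrite -[RHS](mkseq_nth x0) /mkseq; apply/eq_in_map => i.
  by rewrite mem_iota add0n => /andP [_ hi]; rewrite /perW modn_small.
have -> : size w = size w + 0 by rewrite addn0.
rewrite iotaDl -map_comp; apply: eq_map => i /=.
by rewrite /perW modnDl.
Qed.
End Periodic.

Section FO.
Variables (Q S : finType) (delta : S -> Q -> Q) (rho : Q -> S -> S).
Hypothesis Hrinj : forall x, injective (rho x).
Hypothesis Hdinj : forall i, injective (delta i).
Hypothesis Hnoasl : no_active_self_liftable_branch delta rho.

Local Notation rw := (rho_word delta rho).
Local Notation dw := (delta_word delta rho).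
Local Notation rs := (rho_states delta rho).
Local Notation sc := (same_comp delta rho).
Local Notation ds := (delta_states delta rho).

Lemma stab_levels (W : nat -> Q) k : 0 < k -> (forall i, W (k + i) = W i) ->
  exists N, forall m, N <= m -> forall a b, sc (pref W m) a -> sc (pref W m) b ->
    take N a = take N b -> a = b.
Proof.
move=> hk hW.
have hadd : forall m, pref W (k + m) = take k (pref W (k + m)) ++ pref W m.
  move=> m; rewrite -{1}(cat_take_drop k (pref W (k + m))); congr (_ ++ _).
  rewrite /pref /mkseq iotaD map_cat drop_size_cat ?size_map ?size_iota // add0n.
  have -> : k = k + 0 by rewrite addn0.
  by rewrite iotaDl -map_comp; apply: eq_map => i /=; rewrite hW.
have hsl : self_liftable_branch delta rho W.
  exists k; split => // m; apply: liftable_of => //.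
    by rewrite /pref !size_mkseq ltnS leq_addr.
  rewrite /pref !size_mkseq.
  have -> : (m + k).+1 - m.+1 = k by rewrite subSS addnC addnK.
  have -> : (m + k).+1 = k + m.+1 by rewrite addnC addnS.
  rewrite [X in drop _ X]hadd drop_size_cat; first exact: rst_refl.
  by rewrite size_takel // size_mkseq leq_addr.
have hna : ~ active_branch delta rho W by move=> ha; apply: (Hnoasl (conj ha hsl)).
have [N hN] : exists N, forall j, N <= j -> label_one delta rho (pref W j.+1).
  by apply: contrapT => h; apply: hna.
exists N => m hm; elim: m hm => [|m IH] hm a b ha hb hab.
  by move: (sc_size ha) (sc_size hb); rewrite /pref size_mkseq => /esym/size0nil -> /esym/size0nil ->.
case: (leqP N m) => hNm; last first.
  have eN : N = m.+1 by apply/eqP; rewrite eqn_leq hm hNm.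
  by move: hab; rewrite eN !take_oversize // -?(sc_size ha) -?(sc_size hb) /pref size_mkseq.
have hl := hN m hNm; rewrite /label_one /pref size_mkseq /= in hl.
apply: (card_inj (rho:=rho) Hdinj (a := pref W m.+1) (m := m)) => //.
  by rewrite /pref size_mkseq.
apply: IH => //.
- by rewrite -[pref W m](take_mkseq' W (leqnSn m)); apply: sc_take.
- by rewrite -[pref W m](take_mkseq' W (leqnSn m)); apply: sc_take.
- by rewrite -!take_min !(minn_idPl hNm) hab.
Qed.


Lemma column (w : seq Q) (W : nat -> Q) N (t : seq S) c (s0 : S) :
  (forall m, pref W (size w + m) = w ++ pref W m) ->
  (forall m, N <= m -> forall a b, sc (pref W m) a -> sc (pref W m) b ->
    take N a = take N b -> a = b) ->
  c < size t ->
  let B := #|{: S * N.-tuple Q}| in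
  nth s0 (iter B (rs w) t) c = nth s0 (iter (B + B`!) (rs w) t) c.
Proof.
move=> hadd hstab hc B.
set f := rs w.
pose tj j := iter j f t.
have hsz : forall j, size (tj j) = size t.
  by elim=> //= j IH; rewrite size_rs ?IH.
pose l j := nth s0 (tj j) c.
pose Z j m := ds (take c (tj j)) (pref W m).
have F3 : forall j m, Z j (size w + m) = ds (take c (tj j)) w ++ Z j.+1 m.
  move=> j m; rewrite /Z hadd ds_catQ; congr (_ ++ _).
  by rewrite -take_rs.
have F4 : forall j, l j.+1 = out_letter rho (ds (take c (tj j)) w) (l j).
  move=> j; rewrite /l.
  change (nth s0 (f (tj j)) c = out_letter rho (ds (take c (tj j)) w) (nth s0 (tj j) c)).
  have hc' : c < size (tj j) by rewrite hsz.
  move: hc'; set u := tj j => hc'.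
  rewrite -{1}(cat_take_drop c u) (drop_nth s0) //.
  rewrite /f rs_catS rs_consS nth_cat size_rs size_takel ?hsz ?(ltnW hc) //.
  by rewrite ltnn subnn.
have hZs : forall j, size (Z j N) == N by move=> j; rewrite size_ds /pref size_mkseq.
have Det : forall i i', l i = l i' -> Z i N = Z i' N -> l i.+1 = l i'.+1 /\ Z i.+1 N = Z i'.+1 N.
  move=> i i' el eZ.
  have e2 : Z i (size w + N) = Z i' (size w + N).
    apply: (hstab (size w + N)); first exact: leq_addl.
    - exact: sc_ds.
    - exact: sc_ds.
    by rewrite /Z !take_ds take_mkseq' ?leq_addl.
  move: e2; rewrite !F3 => /eqP; rewrite eqseq_cat ?size_ds // => /andP [/eqP e1 /eqP e3].
  by split => //; rewrite !F4 e1 el.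
have Iter : forall i i', l i = l i' -> Z i N = Z i' N -> forall r, l (i + r) = l (i' + r) /\ Z (i + r) N = Z (i' + r) N.
  move=> i i' el eZ; elim=> [|r [IH1 IH2]]; first by rewrite !addn0.
  by rewrite !addnS; apply: Det.
pose g j : (S * N.-tuple Q)%type := (l j, Tuple (hZs j)).
have [i [i' [hii' hi'B e]]] := pigeon g.
have el : l i = l i' by move: e => /(congr1 fst).
have eZ : Z i N = Z i' N by move: e => /(congr1 (fun p => val p.2)).
set d := i' - i.
have Per : forall q j, i <= j -> l j = l (j + q * d) /\ Z j N = Z (j + q * d) N.
  elim=> [|q IH] j hj; first by rewrite mul0n addn0.
  have [e1 e2] := IH j hj.
  have [e3 e4] := Iter i i' el eZ (j + q * d - i).
  have hr : i + (j + q * d - i) = j + q * d by lia.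
  rewrite hr in e3 e4.
  have -> : j + q.+1 * d = i' + (j + q * d - i) by rewrite /d; nia.
  by split; [rewrite e1 e3 | rewrite e2 e4].
have hdB : d %| B`!.
  by apply: dvdn_fact; rewrite subn_gt0 hii' /= (leq_trans (leq_subr _ _) hi'B).
have [q hq] := dvdnP hdB.
have := Per q B (ltnW (leq_trans hii' hi'B)).
by rewrite -hq => -[].
Qed.

Lemma fin_order w : 0 < size w ->
  exists D, 0 < D /\ forall t, rs (flatten (nseq D w)) t = t.
Proof.
case: w => [|x0 w'] // _; set w := x0 :: w'.
pose W := perW x0 w.
have hk : 0 < size w by [].
have hW : forall i, W (size w + i) = W i by move=> i; rewrite /W /perW modnDl.
have [N hN] := stab_levels hk hW.
have hadd : forall m, pref W (size w + m) = w ++ pref W m.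
  by move=> m; rewrite /pref pref_add.
set B := #|{: S * N.-tuple Q}|.
exists B`!; split; first exact: fact_gt0.
move=> t; rewrite rs_iter.
apply: (@iter_inj_gen _ _ B (@rs_inj _ _ delta _ Hrinj w)).
rewrite -iterD.
case: t => [|s0 t'].
  have h0 : forall j, iter j (rs w) [::] = [::] by elim=> //= j ->; rewrite rs_nil.
  by rewrite !h0.
set t := s0 :: t'.
apply: (@eq_from_nth _ s0).
  have hsz : forall j, size (iter j (rs w) t) = size t.
    by elim=> [|j IH] //; rewrite iterS size_rs IH.
  by rewrite !hsz.
move=> c hc.
have hsz : forall j, size (iter j (rs w) t) = size t.
  by elim=> [|j IH] //; rewrite iterS size_rs IH.
rewrite hsz in hc.
by have := column s0 hadd hN hc; move=> /= h; rewrite h.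
Qed.

End FO.


Lemma card_fiber_sum (T1 T0 : finType) (f : T1 -> T0) (A : {set T1}) (P : pred T0) :
  #|[set b in A | P (f b)]| = \sum_(x | P x) #|[set b in A | f b == x]|.
Proof.
rewrite -sum1_card (partition_big f P); last by move=> b; rewrite inE => /andP [].
apply: eq_bigr => x hx; rewrite -sum1_card; apply: eq_bigl => b.
rewrite !inE; case: (b \in A) => //=; case: (f b =P x) => [->|]; rewrite ?hx ?andbF //.
Qed.

Section Graph.
Variables (Q S : finType) (delta : S -> Q -> Q) (rho : Q -> S -> S).
Hypothesis Hrinj : forall x, injective (rho x).
Hypothesis Hdinj : forall i, injective (delta i).
Hypothesis H3 : forall j, injective (fun x => delta (rho_inv rho x j) x).

Local Notation rw := (rho_word delta rho).
Local Notation dw := (delta_word delta rho).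
Local Notation rs := (rho_states delta rho).
Local Notation sc := (same_comp delta rho).
Local Notation ds := (delta_states delta rho).

Lemma rho_invK x i : rho_inv rho x (rho x i) = i.
Proof.
rewrite /rho_inv; case: pickP => [i' /eqP /Hrinj -> // | /(_ i)].
by rewrite eqxx.
Qed.

Lemma ds_single s h : size (ds s [:: h]) = 1.
Proof. by rewrite size_ds. Qed.

Lemma BIR s : forall s' h h', size s = size s' -> ds s [:: h] = ds s' [:: h'] ->
  rw h s = rw h' s' -> h = h'.
Proof.
elim/last_ind: s => [|r i IH] s' h h'.
  by case: s' => // _ [->].
case/lastP: s' => [|r' i']; first by rewrite size_rcons.
rewrite !size_rcons => /eqP; rewrite eqSS => /eqP hsz.
rewrite -!cats1 !ds_cat !rw_cat.
case eg : (ds r [:: h]) (ds_single r h) => [|g []] // _.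
case eg' : (ds r' [:: h']) (ds_single r' h') => [|g' []] // _.
rewrite /delta_states /= => -[ed].
move=> /eqP; rewrite eqseq_cat ?size_rw // => /andP [/eqP er /eqP ej].
move: ej; rewrite /rho_states /= => -[ej].
have gg : g = g'.
  apply: (H3 (j := rho g i)) => /=.
  by rewrite rho_invK ed ej rho_invK.
subst g'; have ii : i = i' by apply: (Hrinj ej).
subst i'; apply: (IH r') => //; by rewrite eg eg'.
Qed.

Variable ew : seq Q.
Local Notation n := (size ew).

Definition edge (b : seq Q) := [/\ size b = n.+1, sc ew (take n b) & sc ew (drop 1 b)].

Lemma dk_proof (b : n.+1.-tuple Q) : size (drop 1 b) == n.
Proof. by rewrite size_drop size_tuple subn1. Qed.
Definition dk (b : n.+1.-tuple Q) : n.-tuple Q := Tuple (dk_proof b).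

Definition Ed : {set n.+1.-tuple Q} := [set b : n.+1.-tuple Q | `[< edge b >]].
Definition od (x : n.-tuple Q) := #|[set b in Ed | @tk Q n b == x]|.
Definition idg (x : n.-tuple Q) := #|[set b in Ed | dk b == x]|.

Lemma edge_ds t b : edge b -> edge (ds t b).
Proof.
move=> [h1 h2 h3]; split.
- by rewrite size_ds.
- by rewrite take_ds; apply: sc_trans h2 (sc_ds _ _ _ _).
- by rewrite drop_ds; apply: sc_trans h3 (sc_ds _ _ _ _).
Qed.

Lemma od_le (x y : n.-tuple Q) : sc ew x -> sc ew y -> od x <= od y.
Proof.
move=> hx hy.
have [t ht] : exists t, val y = ds t x.
  by apply/(@sc_fwd _ _ delta rho Hdinj); apply: sc_trans (sc_sym hx) hy.
have hsz : forall b : n.+1.-tuple Q, size (ds t b) == n.+1.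
  by move=> b; rewrite size_ds size_tuple.
pose phi (b : n.+1.-tuple Q) : n.+1.-tuple Q := Tuple (hsz b).
have phi_inj : injective phi.
  by move=> b b' /(congr1 val) /= /(ds_inj Hdinj) /val_inj.
rewrite /od -(card_imset [set b in Ed | @tk Q n b == x] phi_inj); apply: subset_leq_card.
apply/subsetP => z /imsetP [b]; rewrite !inE => /andP [hb /eqP hbx] ->.
move: hb; rewrite ?inE => /asboolP hb.
apply/andP; split; first by apply/asboolP; apply: edge_ds.
apply/eqP/val_inj => /=; by rewrite take_ds ht -hbx.
Qed.

Lemma rw_surj h s : exists s', rw h s' = s.
Proof.
exact: (iter_preimage (@rw_inj _ _ delta _ Hrinj h) (@size_rw _ _ delta rho h) s).
Qed.

Lemma rw_surjb h s : exists s', rw h s' == s.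
Proof. by have [s' e] := rw_surj h s; exists s'; rewrite e. Qed.

Definition pre h s := xchoose (rw_surjb h s).
Lemma preK h s : rw h (pre h s) = s.
Proof. exact/eqP/(xchooseP (rw_surjb h s)). Qed.

Lemma size_pre h s : size (pre h s) = size s.
Proof. by rewrite -[in RHS](preK h s) size_rw. Qed.

Lemma id_le (x y : n.-tuple Q) : sc ew x -> sc ew y -> idg x <= idg y.
Proof.
move=> hx hy.
have [t ht] : exists t, val y = ds t x.
  by apply/(@sc_fwd _ _ delta rho Hdinj); apply: sc_trans (sc_sym hx) hy.
have hsz : forall b : n.+1.-tuple Q, size (ds (pre (thead b) t) b) == n.+1.
  by move=> b; rewrite size_ds size_tuple.
pose psi (b : n.+1.-tuple Q) : n.+1.-tuple Q := Tuple (hsz b).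
have hb1 : forall b : n.+1.-tuple Q, take 1 b = [:: thead b].
  by move=> b; case: b => [[|h b'] hb] //=; rewrite take0 /thead (tnth_nth h).
have psi_drop : forall b : n.+1.-tuple Q, drop 1 (psi b) = ds t (drop 1 b).
  have rs1 : forall h s, rs [:: h] s = rw h s by [].
  by move=> b; rewrite /= drop_ds hb1 rs1 preK.
have psi_inj : {in [set b in Ed | dk b == x] &, injective psi}.
  move=> b b'; rewrite !inE => /andP [_ /eqP hb] /andP [_ /eqP hb'] e.
  have e1 : take 1 (psi b) = take 1 (psi b') by rewrite e.
  rewrite /= !take_ds !hb1 in e1.
  have hh : thead b = thead b'.
    apply: (BIR (s := pre (thead b) t) (s' := pre (thead b') t)) => //.
      by rewrite !size_pre.
    by rewrite !preK.
  apply/val_inj.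
  have E : forall c : n.+1.-tuple Q, val c = thead c :: drop 1 c.
    by move=> c; rewrite -[thead c :: _]/([:: thead c] ++ drop 1 c) -hb1 cat_take_drop.
  rewrite (E b) (E b') hh.
  by have := congr1 val hb; have := congr1 val hb'; rewrite /= => -> ->.
rewrite /idg -(card_in_imset psi_inj); apply: subset_leq_card.
apply/subsetP => z /imsetP [b]; rewrite !inE => /andP [hb /eqP hbx] ->.
move: hb; rewrite ?inE => /asboolP hb.
apply/andP; split.
  apply/asboolP; case: hb => h1 h2 h3; split.
  - by rewrite size_tuple.
  - by rewrite /= take_ds; apply: sc_trans h2 (sc_ds _ _ _ _).
  - by rewrite psi_drop; apply: sc_trans h3 (sc_ds _ _ _ _).
apply/eqP/val_inj => /=; rewrite psi_drop ht -hbx //.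
Qed.

End Graph.


Section Graph2.
Variables (Q S : finType) (delta : S -> Q -> Q) (rho : Q -> S -> S).
Hypothesis Hrinj : forall x, injective (rho x).
Hypothesis Hdinj : forall i, injective (delta i).
Hypothesis H3 : forall j, injective (fun x => delta (rho_inv rho x j) x).

Local Notation rw := (rho_word delta rho).
Local Notation dw := (delta_word delta rho).
Local Notation rs := (rho_states delta rho).
Local Notation sc := (same_comp delta rho).
Local Notation ds := (delta_states delta rho).

Variable ew : seq Q.
Local Notation n := (size ew).
Local Notation edge := (edge delta rho ew).
Local Notation Ed := (Ed delta rho ew).
Local Notation od := (@od _ _ delta rho ew).
Local Notation idg := (@idg _ _ delta rho ew).

Lemma IC (X : pred (seq Q)) : (forall y, X y -> sc ew y) ->
  (forall b, edge b -> X (take n b) -> X (drop 1 b)) ->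
  forall b, edge b -> X (drop 1 b) -> X (take n b).
Proof.
move=> hXs hout b hb hXb.
have hew : size ew == n by [].
pose ewt : n.-tuple Q := Tuple hew.
have hst : sc ew ewt by apply: rst_refl.
have odc : forall x : n.-tuple Q, sc ew x -> od x = od ewt.
  by move=> x hx; apply/eqP; rewrite eqn_leq !(od_le Hdinj).
have idc : forall x : n.-tuple Q, sc ew x -> idg x = idg ewt.
  by move=> x hx; apply/eqP; rewrite eqn_leq !(id_le Hrinj Hdinj H3).
pose Pst : pred (n.-tuple Q) := fun x => `[< sc ew x >].
have cnt : forall P : pred (n.-tuple Q), (forall x, P x -> sc ew x) ->
    #|[set b in Ed | P (@tk Q n b)]| = #|P| * od ewt /\
    #|[set b in Ed | P (dk b)]| = #|P| * idg ewt.
  move=> P hP; rewrite !card_fiber_sum; split.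
  - rewrite (eq_bigr (fun _ => od ewt)); first exact: sum_nat_const.
    by move=> x /hP /odc.
  - rewrite (eq_bigr (fun _ => idg ewt)); first exact: sum_nat_const.
    by move=> x /hP /idc.
have [c1 c2] := cnt Pst (fun x h => asboolW h).
have EdO : [set b in Ed | Pst (@tk Q n b)] = Ed.
  apply/setP => c; rewrite !inE; apply/andb_idr => /asboolP [_ h _].
  by apply/asboolP.
have EdI : [set b in Ed | Pst (dk b)] = Ed.
  apply/setP => c; rewrite !inE; apply/andb_idr => /asboolP [_ _ h].
  by apply/asboolP.
rewrite EdO in c1; rewrite EdI c1 in c2.
have hpos : 0 < #|Pst| by apply/card_gt0P; exists ewt; rewrite /Pst unfold_in; apply/asboolP.
have eqd : od ewt = idg ewt by apply/eqP; rewrite -(eqn_pmul2l hpos) c2.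
pose P : pred (n.-tuple Q) := fun x => X x.
have [d1 d2] := cnt P (fun x h => hXs _ h).
have sub : [set c in Ed | P (@tk Q n c)] \subset [set c in Ed | P (dk c)].
  apply/subsetP => c; rewrite !inE => /andP [hc hP]; rewrite hc /=.
  by move: hc; rewrite ?inE => /asboolP hc; apply: hout.
have := subset_cardP _ sub; rewrite d1 d2 eqd => /(_ erefl) E.
have hsb : size b == n.+1 by case: hb => -> _ _.
pose bt : n.+1.-tuple Q := Tuple hsb.
have hbt : bt \in Ed by rewrite inE; apply/asboolP.
have he : `[< edge bt >] by apply/asboolP.
have := E bt; rewrite !inE he /= /P /=.
by rewrite hXb.
Qed.

End Graph2.


Lemma flatten_nseqS (T : Type) k (A : seq T) :
  flatten (nseq k.+1 A) = flatten (nseq k A) ++ A.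
Proof. by rewrite -addn1 nseqD flatten_cat /= cats0. Qed.

Lemma flatten_shift (T : Type) k (a b : seq T) :
  a ++ flatten (nseq k (b ++ a)) = flatten (nseq k (a ++ b)) ++ a.
Proof.
elim: k => [|k IH]; first by rewrite /= cats0.
by rewrite !flatten_nseqS catA IH -!catA.
Qed.

Section Walks.
Variables (Q S : finType) (delta : S -> Q -> Q) (rho : Q -> S -> S).
Hypothesis Hrinj : forall x, injective (rho x).
Hypothesis Hdinj : forall i, injective (delta i).
Hypothesis H3 : forall j, injective (fun x => delta (rho_inv rho x j) x).

Local Notation rw := (rho_word delta rho).
Local Notation rs := (rho_states delta rho).
Local Notation sc := (same_comp delta rho).
Local Notation ds := (delta_states delta rho).

Variable ew : seq Q.
Local Notation n := (size ew).
Hypothesis hn : 0 < n.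
Local Notation edge := (edge delta rho ew).

Definition WOK (w : seq Q) := forall i, i + n <= size w -> sc ew (take n (drop i w)).
Definition lastn (w : seq Q) := drop (size w - n) w.

Lemma sc_sz u : sc ew u -> size u = n.
Proof. by move/sc_size. Qed.

Lemma WOK_glue a v b : size v = n -> WOK (a ++ v) -> WOK (v ++ b) -> WOK (a ++ v ++ b).
Proof.
move=> hv ha hb i; rewrite !size_cat hv => hi.
case: (leqP i (size a)) => hia.
  rewrite catA drop_cat size_cat hv.
  have -> : i < size a + n by lia.
  rewrite takel_cat; last by rewrite size_drop size_cat hv; lia.
  by apply: ha; rewrite size_cat hv; lia.
rewrite drop_cat; have -> : (i < size a) = false by apply/negbTE; rewrite -leqNgt ltnW.
by apply: hb; rewrite size_cat hv; lia.
Qed.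

Lemma WOK_take j w : WOK w -> WOK (take j w).
Proof.
move=> hw i; rewrite size_take => hi.
have hij : i + n <= j by move: hi; case: ltnP => // h1 h2; lia.
have hiw : i + n <= size w by move: hi; case: ltnP => // h1 h2; lia.
have -> : drop i (take j w) = take (j - i) (drop i w).
  by rewrite take_drop subnK //; lia.
rewrite take_takel; last by lia.
exact: hw.
Qed.

Lemma WOK_stem u : sc ew u -> WOK u.
Proof.
move=> hu i; rewrite (sc_sz hu) => hi.
have -> : i = 0 by lia.
by rewrite drop0 take_oversize ?(sc_sz hu).
Qed.

Lemma WOK_edge b : edge b <-> size b = n.+1 /\ WOK b.
Proof.
split.
  move=> [h1 h2 h3]; split => // i; rewrite h1 => hi.
  case: i hi => [|[|i]] hi; last by lia.
  - by rewrite drop0.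
  - by rewrite take_oversize // size_drop h1; lia.
move=> [h1 h2]; split => //.
- by rewrite -[b]drop0; apply: h2; rewrite h1.
- by rewrite -(take_oversize (n := n) (s := drop 1 b)) ?size_drop ?h1 //;
    [apply: h2; rewrite h1; lia | lia].
Qed.

Lemma WOK_lastn w : WOK w -> n <= size w -> sc ew (lastn w).
Proof.
move=> hw hs; rewrite /lastn -(take_oversize (n := n) (s := drop _ w)).
  by apply: hw; lia.
by rewrite size_drop; lia.
Qed.

Lemma reach_back (X : seq Q -> Prop) :
  (forall b, edge b -> X (drop 1 b) -> X (take n b)) ->
  forall w, WOK w -> n <= size w -> X (lastn w) -> X (take n w).
Proof.
move=> hin; elim/last_ind => [|w' x IH] hw hs hX.
  by move: hs; rewrite /= leqNgt hn.
move: hs; rewrite size_rcons => hs.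
case: (ltnP (size w') n) => h.
  have e : size w' + 1 = n by lia.
  move: hX; rewrite /lastn size_rcons.
  have -> : (size w').+1 - n = 0 by lia.
  by rewrite drop0 take_oversize // size_rcons; lia.
have hw' : WOK w' by rewrite -(take_size_cat [:: x] (erefl (size w'))) cats1; apply: WOK_take.
have -> : take n (rcons w' x) = take n w' by rewrite -cats1 takel_cat.
apply: IH => //.
set b := drop (size w' - n) (rcons w' x).
have hb : edge b.
  apply/WOK_edge; split; first by rewrite size_drop size_rcons; lia.
  move=> i; rewrite size_drop size_rcons => hi.
  rewrite /b drop_drop; apply: hw; rewrite size_rcons; lia.
have e1 : take n b = lastn w'.
  rewrite /b /lastn -cats1 drop_cat.
  case: ltnP => h2; last by lia.
  by rewrite take_size_cat // size_drop; lia.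
have e2 : drop 1 b = lastn (rcons w' x).
  by rewrite /b /lastn drop_drop size_rcons; congr drop; lia.
by rewrite -e1; apply: hin => //; rewrite e2.
Qed.


Definition Rset (v y : seq Q) := exists w, [/\ WOK w, n <= size w, take n w = v & lastn w = y].

Lemma Rset_refl v : sc ew v -> Rset v v.
Proof.
move=> hv; exists v; split; first exact: WOK_stem.
- by rewrite (sc_sz hv).
- by rewrite take_oversize // (sc_sz hv).
- by rewrite /lastn (sc_sz hv) subnn drop0.
Qed.

Lemma lastn_cat a w : n <= size w -> lastn (a ++ w) = lastn w.
Proof.
move=> h; rewrite /lastn drop_cat size_cat.
case: ltnP => h2; first by lia.
by congr drop; lia.
Qed.

Lemma Rset_out v y b : Rset v y -> edge b -> take n b = y -> Rset v (drop 1 b).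
Proof.
move=> [w [hw hs ht hl]] hb hbt.
have [hbs hbw] := (WOK_edge b).1 hb.
set a := take (size w - n) w.
have ew' : w = a ++ y by rewrite -hl /a cat_take_drop.
have eb : b = y ++ drop n b by rewrite -hbt cat_take_drop.
have hy : size y = n by rewrite -hl /lastn size_drop; lia.
exists (a ++ y ++ drop n b); split.
- by apply: WOK_glue => //; [rewrite -ew' | rewrite -eb].
- by rewrite !size_cat; lia.
- by rewrite catA takel_cat -?ew' // size_cat; lia.
- rewrite -eb lastn_cat ?hbs //.
  by rewrite /lastn hbs; congr drop; lia.
Qed.

Lemma back u v w : sc ew v -> WOK w -> n <= size w -> take n w = u -> lastn w = v -> Rset v u.
Proof.
move=> hv hw hs hu hl.
have hX := IC Hrinj Hdinj H3 (X := fun y => `[< Rset v y >]).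
rewrite -hu; apply: (reach_back (X := Rset v)) => //.
  move=> b hb hd.
  apply/asboolP; apply: hX => //.
  - by move=> y /asboolP [w' [h1 h2 _ <-]]; apply: WOK_lastn.
  - by move=> b' hb' /asboolP hr; apply/asboolP; apply: Rset_out hr hb' _.
  - by apply/asboolP.
by rewrite hl; apply: Rset_refl.
Qed.

End Walks.


Lemma size_flatten_nseq (T : Type) k (c : seq T) : size (flatten (nseq k c)) = k * size c.
Proof. by elim: k => //= k IH; rewrite size_cat IH mulSn. Qed.

Section Main.
Variables (Q S : finType) (delta : S -> Q -> Q) (rho : Q -> S -> S).
Hypothesis Hrinj : forall x, injective (rho x).
Hypothesis Hdinj : forall i, injective (delta i).
Hypothesis H3 : forall j, injective (fun x => delta (rho_inv rho x j) x).

Local Notation rw := (rho_word delta rho).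
Local Notation rs := (rho_states delta rho).
Local Notation sc := (same_comp delta rho).
Local Notation ds := (delta_states delta rho).

Variable ew : seq Q.
Local Notation n := (size ew).
Hypothesis hn : 0 < n.
Local Notation edge := (edge delta rho ew).
Local Notation WOK := (@WOK _ _ delta rho ew).
Local Notation lastn := (@lastn _ ew).
Hypothesis hb1 : exists b1, edge b1.

Lemma DEC w : 2 * n <= size w ->
  w = take n w ++ drop n (take (size w - n) w) ++ lastn w.
Proof.
move=> h.
rewrite catA -{1}(@take_takel _ n (size w - n) w); last by lia.
by rewrite !cat_take_drop.
Qed.

Lemma cycle u : sc ew u -> exists s0, WOK (u ++ s0 ++ u).
Proof.
move=> hu.
have [b1 hb] := hb1.
have [hb1s hb1t hb1d] := hb.
have [t ht] : exists t, u = ds t (take n b1).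
  by apply/(@sc_fwd _ _ delta rho Hdinj); apply: sc_trans (sc_sym hb1t) hu.
set b := ds t b1.
have hbe : edge b by apply: edge_ds.
have hbt : take n b = u by rewrite take_ds ht.
have [hbs hbw] : size b = n.+1 /\ WOK b by apply/WOK_edge.
have hbl : lastn b = drop 1 b by rewrite /lastn hbs; congr drop; lia.
set v' := drop 1 b.
have hv' : sc ew v' by case: hbe.
have hbn : n <= size b by rewrite hbs.
have [w2 [hw2 hs2 ht2 hl2]] := back Hrinj Hdinj H3 hn hv' hbw hbn hbt hbl.
set Y := take 1 b ++ v' ++ drop n w2.
have hv's : size v' = n by rewrite size_drop hbs; lia.
have eY : Y = take 1 b ++ w2 by rewrite /Y -ht2 cat_take_drop.
have hY : WOK Y.
  apply: WOK_glue => //; first by rewrite cat_take_drop.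
  by rewrite -ht2 cat_take_drop.
have hYt : take n Y = u.
  by rewrite /Y catA takel_cat ?cat_take_drop // size_cat hv'; lia.
have hYl : lastn Y = u by rewrite eY lastn_cat.
have hYs : n < size Y by rewrite eY size_cat size_takel ?hbs; lia.
set c := drop n Y.
have eYc : Y = u ++ c by rewrite -hYt cat_take_drop.
have hcs : 0 < size c by rewrite size_drop; lia.
have Pk : forall k, WOK (u ++ flatten (nseq k c)) /\ lastn (u ++ flatten (nseq k c)) = u.
  elim=> [|k [IH1 IH2]].
    by rewrite cats0; split; [apply: WOK_stem | rewrite /lastn (sc_sz hu) subnn drop0].
  set Yk := u ++ flatten (nseq k c).
  have e1 : u ++ flatten (nseq k.+1 c) = take (size Yk - n) Yk ++ u ++ c.
    by rewrite flatten_nseqS catA -{2}IH2 catA cat_take_drop.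
  rewrite e1; split.
    apply: (WOK_glue hn); first exact: sc_sz hu.
      by rewrite -IH2 cat_take_drop.
    by rewrite -eYc.
  by rewrite -eYc lastn_cat ?hYl //; lia.
have [Pn1 Pn2] := Pk n.
set Yn := u ++ flatten (nseq n c) in Pn1 Pn2.
have hYns : 2 * n <= size Yn by rewrite size_cat size_flatten_nseq (sc_sz hu); nia.
exists (drop n (take (size Yn - n) Yn)).
have hYnt : take n Yn = u by rewrite takel_cat ?take_oversize // (sc_sz hu).
by rewrite -{1}hYnt -Pn2 -DEC.
Qed.


Lemma jword_of w : sc ew (take n w) -> WOK w -> n <= size w -> jword delta rho ew w.
Proof.
move=> hu hw hs j /andP [hj0 hj].
case: (leqP j n) => hjn.
  left; split; first by rewrite size_takel.
  rewrite size_takel //.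
  rewrite -(take_takel _ hjn) -[take j ew](take_takel _ hjn).
  rewrite (take_oversize (s := ew)) //.
  by apply: sc_take => //; apply: sc_sym.
right; split.
- by rewrite size_takel.
- by rewrite take_takel ?(ltnW hjn) //; apply: sc_sym.
- apply: liftable_of => //; first by rewrite size_takel // ltnW.
  rewrite size_takel //.
  have -> : drop (j - n) (take j w) = take n (drop (j - n) w).
    by rewrite take_drop subnKC // ltnW.
  by apply: hw; rewrite subnK // ltnW.
Qed.

Lemma WOK_of_jword w : sc ew (take n w) -> jword delta rho ew w -> WOK w.
Proof.
move=> hu hj i hi.
case: i hi => [|i] hi; first by rewrite drop0.
have := hj (i.+1 + n); rewrite hi addn_gt0 /= => /(_ erefl) [[hs _]|[_ _ hl]].
  by move: hs; rewrite size_takel //; lia.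
have hsz : size (take (i.+1 + n) w) = i.+1 + n by rewrite size_takel.
have := liftable_to hl; rewrite hsz addnK.
rewrite -[i.+1 + n]addnC -take_drop.
by apply; rewrite leq_addr.
Qed.

Hypothesis Hfo : forall w, 0 < size w -> exists D, 0 < D /\ forall t, rs (flatten (nseq D w)) t = t.

Lemma CP a c : sc ew a -> WOK (a ++ c ++ a) -> forall k, WOK (flatten (nseq k (a ++ c)) ++ a).
Proof.
move=> ha hw; elim=> [|k IH]; first exact: WOK_stem.
rewrite -flatten_shift in IH.
rewrite -[flatten _]/((a ++ c) ++ flatten (nseq k (a ++ c))) -catA -flatten_shift.
apply: (WOK_glue hn); [exact: sc_sz ha | by rewrite -catA | exact: IH].
Qed.

Lemma rel_refl u : sc ew u -> stem_rel delta rho ew u u.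
Proof.
move=> hu; have [s0 hs0] := cycle hu.
have hpos : 0 < size (u ++ s0) by rewrite size_cat (sc_sz hu); lia.
have [D [hD hfo]] := Hfo hpos.
case: D hD hfo => [|D'] // _ hfo.
have E1 : u ++ flatten (nseq D' (s0 ++ u)) ++ s0 = flatten (nseq D'.+1 (u ++ s0)).
  by rewrite flatten_nseqS [RHS]catA -[in RHS]flatten_shift -!catA.
exists (flatten (nseq D' (s0 ++ u)) ++ s0); split.
  rewrite catA E1.
  apply: jword_of.
  - by rewrite -E1 -!catA takel_cat ?take_oversize ?(sc_sz hu).
  - exact: CP.
  - by rewrite !size_cat (sc_sz hu); lia.
by move=> t; rewrite E1.
Qed.

Lemma rs_id_cat x p t : (forall t, rs p t = t) -> rs (x ++ p) t = rs x t.
Proof. by move=> hp; rewrite rs_cat hp. Qed.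

Lemma rel_sym u v : sc ew u -> sc ew v -> stem_rel delta rho ew u v -> stem_rel delta rho ew v u.
Proof.
move=> hu hv [s [hj hrho]].
have hw : WOK (u ++ s ++ v).
  apply: WOK_of_jword => //.
  by rewrite takel_cat ?take_oversize ?(sc_sz hu).
have [w2 [hw2 hs2 ht2 hl2]] : Rset delta rho ew v u.
  apply: (back Hrinj Hdinj H3 hn hv hw) => //.
  - by rewrite !size_cat (sc_sz hu); lia.
  - by rewrite takel_cat ?take_oversize ?(sc_sz hu).
  - by rewrite catA (lastn_cat hn) ?(sc_sz hv) // /lastn (sc_sz hv) subnn drop0.
have [s0 hs0] := cycle hu.
set s1 := drop n w2 ++ s0.
have hw1 : WOK (v ++ s1 ++ u).
  have e2 : w2 = take (size w2 - n) w2 ++ u by rewrite -hl2 cat_take_drop.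
  have e3 : v ++ s1 ++ u = take (size w2 - n) w2 ++ u ++ s0 ++ u.
    have e4 : v ++ drop n w2 = w2 by rewrite -ht2 cat_take_drop.
    by rewrite /s1 catA catA e4 {1}e2 -!catA.
  rewrite e3; apply: (WOK_glue hn); first exact: sc_sz hu.
    by rewrite -e2.
  exact: hs0.
set A := v ++ (s1 ++ u ++ s).
have hA : WOK (v ++ (s1 ++ u ++ s) ++ v).
  have -> : v ++ (s1 ++ u ++ s) ++ v = (v ++ s1) ++ u ++ (s ++ v) by rewrite -!catA.
  apply: (WOK_glue hn); first exact: sc_sz hu.
    by rewrite -catA.
  exact: hw.
have hpos : 0 < size A by rewrite size_cat (sc_sz hv); lia.
have [D [hD hfo]] := Hfo hpos.
case: D hD hfo => [|D'] // _ hfo.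
have hCP : WOK (flatten (nseq D'.+1 A) ++ v) := CP (k := D'.+1) hv hA.
exists (flatten (nseq D' ((s1 ++ u ++ s) ++ v)) ++ s1).
have E : v ++ (flatten (nseq D' ((s1 ++ u ++ s) ++ v)) ++ s1) ++ u ++ s = flatten (nseq D'.+1 A).
  have fs := flatten_shift D' v (s1 ++ u ++ s).
  move: fs; set F := flatten (nseq D' ((s1 ++ u ++ s) ++ v)) => fs.
  rewrite -(catA F s1 (u ++ s)) (catA v F) fs flatten_nseqS /A -!catA.
  done.
split.
  have E2 : v ++ (flatten (nseq D' ((s1 ++ u ++ s) ++ v)) ++ s1) ++ u =
      take (size (v ++ (flatten (nseq D' ((s1 ++ u ++ s) ++ v)) ++ s1) ++ u))
        (flatten (nseq D'.+1 A) ++ v).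
    rewrite -E; set F := flatten (nseq D' _).
    rewrite (_ : (v ++ (F ++ s1) ++ u ++ s) ++ v = (v ++ (F ++ s1) ++ u) ++ (s ++ v)).
      by rewrite take_size_cat.
    by rewrite -!catA.
  rewrite E2; apply: jword_of.
  - by rewrite -E2 takel_cat ?take_oversize ?(sc_sz hv).
  - exact: WOK_take.
  - by rewrite -E2 !size_cat (sc_sz hv); lia.
move=> t; rewrite -(rs_id_cat _ _ hrho) -catA.
by move: E; rewrite -!catA => ->.
Qed.

Lemma rel_trans u v w : sc ew u -> sc ew v -> sc ew w ->
  stem_rel delta rho ew u v -> stem_rel delta rho ew v w -> stem_rel delta rho ew u w.
Proof.
move=> hu hv hw [s1 [hj1 hr1]] [s2 [hj2 hr2]].
have hw1 : WOK (u ++ s1 ++ v).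
  by apply: WOK_of_jword => //; rewrite takel_cat ?take_oversize ?(sc_sz hu).
have hw2 : WOK (v ++ s2 ++ w).
  by apply: WOK_of_jword => //; rewrite takel_cat ?take_oversize ?(sc_sz hv).
exists (s1 ++ v ++ s2); split.
  have e : u ++ (s1 ++ v ++ s2) ++ w = (u ++ s1) ++ v ++ (s2 ++ w) by rewrite -!catA.
  rewrite e; apply: jword_of.
  - by rewrite -!catA takel_cat ?take_oversize ?(sc_sz hu).
  - apply: (WOK_glue hn); first exact: sc_sz hv.
      by rewrite -catA.
    exact: hw2.
  - by rewrite !size_cat (sc_sz hu); lia.
by move=> t; rewrite catA rs_cat hr2 hr1.
Qed.

End Main.


Theorem lemma5p10 (Q S : finType) (delta : S -> Q -> Q) (rho : Q -> S -> S)
  (HQ : 0 < #|Q|) (HS : 0 < #|S|)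
  (Hbirev : bireversible delta rho)
  (Hconn : connected_automaton delta)
  (Hnoasl : no_active_self_liftable_branch delta rho)
  (ew : seq Q) (Hj : jungle_path delta rho ew) :
  [/\ (forall u, stem delta rho ew u -> stem_rel delta rho ew u u),
      (forall u v, stem delta rho ew u -> stem delta rho ew v ->
         stem_rel delta rho ew u v -> stem_rel delta rho ew v u)
    & (forall u v w, stem delta rho ew u -> stem delta rho ew v ->
         stem delta rho ew w ->
         stem_rel delta rho ew u v -> stem_rel delta rho ew v w ->
         stem_rel delta rho ew u w)].
Proof.
have [Hrinj Hdinj H3] := Hbirev.
have [hn _ [b1 [b2 [hl1 _ _]]] _] := Hj.
have hb1 : exists b, edge delta rho ew b.
  exists b1; case: hl1 => h1 h2 h3; split => //.
  - exact: sc_sym.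
  - have := liftable_to h3; rewrite h1 subSnn; apply; exact: leqnSn.
have Hfo := fin_order Hrinj Hdinj Hnoasl.
split.
- by move=> u hu; apply: (rel_refl Hrinj Hdinj H3 hn hb1 Hfo hu).
- by move=> u v hu hv; apply: (rel_sym Hrinj Hdinj H3 hn hb1 Hfo hu hv).
- by move=> u v w hu hv hw; apply: (rel_trans Hdinj hn hu hv hw).
Qed.
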